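(* Let $a\in\mathbb{N}$ and $X=\overline{a^{\mathbb{N}}}$ (closure in the $2$-adic topology on $\mathbb{N}\setminus2\mathbb{N}$). (1) If $a\in1+4\mathbb{N}$, then $X=1+2^{n(X)-2}\mathbb{N}_0$. (2) If $a\in3+4\mathbb{N}$, then $X=(1+2^{n(X)-1}\mathbb{N}_0)\cup(-1+2^{n(X)-2}+2^{n(X)-1}\mathbb{N}_0)$. In both cases $i(X)=2^{n(X)-3}$.
   Context: $\mathbb{N}=\{1,2,\dots\}$, $\mathbb{N}_0=\{0\}\cup\mathbb{N}$, $x^{\mathbb{N}}=\{x^k:k\in\mathbb{N}\}$, $c+d\mathbb{N}=\{c+dk:k\in\mathbb{N}\}$, $c+d\mathbb{N}_0=\{c+dk:k\in\mathbb{N}_0\}$. The $2$-adic topology on $\mathbb{N}\setminus2\mathbb{N}$ is generated by the sets $x+2^m\mathbb{N}_0$ ($x,m\in\mathbb{N}$). $\mathbb{Z}_{2^m}^\times$ is the unit group of $\mathbb{Z}/2^m\mathbb{Z}$, $\pi_m:\mathbb{N}\to\mathbb{Z}/2^m\mathbb{Z}$, $x\mapsto x+2^m\mathbb{Z}$. For $X$ of the form $\overline{b^{\mathbb{N}}}$ with $b$ odd, $b\neq 1$: $n(X)=\min\{m\in\mathbb{N}:X=\pi_m^{-1}(\pi_m(X)),\ |\pi_m(X)|\ge3\}$, and $i(X)$ is the index of the subgroup $\pi_{n(X)}(X)$ in $\mathbb{Z}_{2^{n(X)}}^\times$. *)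

(* Defs.v *)
From HB Require Import structures.
From mathcomp Require Import all_boot all_order all_algebra all_fingroup.
From mathcomp Require Import boolp.
Set Implicit Arguments. Unset Strict Implicit. Unset Printing Implicit Defensive.

(* Subsets of N are predicates nat -> Prop; N = {1,2,...}. *)

Definition pow_set (a : nat) : nat -> Prop := fun y => exists k, 0 < k /\ y = a ^ k.

(* The basic open set (x + 2^m N_0) of the 2-adic topology on N \ 2N,
   (as a subset of the space N \ 2N), for x, m in N. *)
Definition basic_open (x m : nat) : nat -> Prop :=
  fun y => odd y /\ exists k, y = x + 2 ^ m * k.

(* Closure in N \ 2N of S (for the topology generated by the basic open sets,
   which form a basis): y is a point of the space and every basic open set
   containing y meets S. *)
Definition closure2 (S : nat -> Prop) : nat -> Prop :=
  fun y => odd y /\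
    forall x m, 0 < x -> 0 < m -> basic_open x m y ->
      exists s, S s /\ odd s /\ basic_open x m s.

Definition saturated (X : nat -> Prop) (m : nat) : Prop :=
  forall y, 0 < y -> (exists x, X x /\ x = y %[mod 2 ^ m]) -> X y.

Definition three_residues (X : nat -> Prop) (m : nat) : Prop :=
  exists x1 x2 x3, [/\ X x1, X x2 & X x3] /\
    [/\ x1 %% 2 ^ m != x2 %% 2 ^ m, x1 %% 2 ^ m != x3 %% 2 ^ m
      & x2 %% 2 ^ m != x3 %% 2 ^ m].

Definition good_level (X : nat -> Prop) (m : nat) : Prop :=
  saturated X m /\ three_residues X m.

Definition is_nX (X : nat -> Prop) (n : nat) : Prop :=
  0 < n /\ good_level X n /\ forall m, 0 < m -> m < n -> ~ good_level X m.

Definition piX_units (X : nat -> Prop) (n : nat) : {set {unit 'Z_(2 ^ n)}} :=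
  [set u : {unit 'Z_(2 ^ n)} | `[< exists x, X x /\ ((x%:R)%R : 'Z_(2 ^ n)) = val u >]].

Definition index_X (X : nat -> Prop) (n : nat) : nat :=
  (#|[set: {unit 'Z_(2 ^ n)}] : piX_units X n|)%g.

(* Main.v *)
Require Import Defs.
From HB Require Import structures.
From mathcomp Require Import all_boot all_order all_algebra all_fingroup.
From mathcomp Require Import boolp.
From mathcomp Require Import zify ring.

Lemma cong_ex d x y : x = y %[mod d] <-> exists t1 t2, x + d*t1 = y + d*t2.
Proof.
split.
  move=> H; exists (y %/ d), (x %/ d).
  by rewrite {1}(divn_eq x d) {2}(divn_eq y d) H; ring.
case=> t1 [t2] E.
by rewrite -(modnMDl t1 x) -(modnMDl t2 y) addnC [in RHS]addnC mulnC (mulnC t2) E.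
Qed.

Lemma congM d x1 y1 x2 y2 : x1 = y1 %[mod d] -> x2 = y2 %[mod d] ->
  x1 * x2 = y1 * y2 %[mod d].
Proof. by move=> H1 H2; rewrite -modnMm H1 H2 modnMm. Qed.

Lemma congX d x y k : x = y %[mod d] -> x ^ k = y ^ k %[mod d].
Proof. by move=> H; rewrite -modnXm H modnXm. Qed.

Lemma cong_dvd d d' x y : d' %| d -> x = y %[mod d] -> x = y %[mod d'].
Proof. by move=> Hd H; rewrite -(modn_dvdm x Hd) H modn_dvdm. Qed.

Lemma cong_exp m M x y : m <= M -> x = y %[mod 2 ^ M] -> x = y %[mod 2 ^ m].
Proof. by move=> H; apply: cong_dvd; rewrite dvdn_exp2l. Qed.

Lemma cong_small c d y : c < d -> (y = c %[mod d] <-> exists k, y = c + d * k).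
Proof.
move=> cd; rewrite (modn_small cd); split.
  by move=> H; exists (y %/ d); rewrite {1}(divn_eq y d) H addnC mulnC.
by case=> k ->; rewrite addnC mulnC modnMDl modn_small.
Qed.

Lemma odd_ex x : odd x -> exists r, x = 2 * r + 1.
Proof. move=> H; exists x./2; rewrite -{1}(odd_double_half x) H; lia. Qed.

Lemma even_ex x : ~~ odd x -> exists r, x = 2 * r.
Proof. move=> H; exists x./2; rewrite -{1}(odd_double_half x) (negbTE H); lia. Qed.

Lemma cong_odd m x y : 0 < m -> x = y %[mod 2 ^ m] -> odd x = odd y.
Proof.
move=> m0 H; have := @cong_exp 1 m x y m0 H; rewrite expn1 !modn2.
by case: (odd x); case: (odd y).
Qed.

Lemma lte w u : 2 <= w -> odd u -> forall j, exists u', odd u' /\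
  (1 + 2 ^ w * u) ^ (2 ^ j) = 1 + 2 ^ (w + j) * u'.
Proof.
move=> w2 ou; elim=> [|j [u' [ou' E]]].
  by exists u; rewrite expn0 expn1 addn0.
exists (u' + 2 ^ (w + j).-1 * u' ^ 2); split.
  rewrite oddD oddM !oddX ou' /= orbF.
  have -> : ((w + j).-1 == 0) = false by lia.
  done.
rewrite [2 ^ j.+1]expnS [2 * 2 ^ j]mulnC expnM E.
have -> : 2 ^ (w + j) = 2 * 2 ^ (w + j).-1.
  by rewrite -expnS prednK //; lia.
have -> : 2 ^ (w + j.+1) = 4 * 2 ^ (w + j).-1.
  by rewrite addnS expnS -[(w + j)]prednK ?expnS; [ring | lia].
ring.
Qed.

Lemma odd_pow b k : odd b -> odd (b ^ k).
Proof. by move=> ob; rewrite oddX ob orbT. Qed.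

Lemma image_b w u k : (1 + 2 ^ w * u) ^ k = 1 %[mod 2 ^ w].
Proof.
have H : 1 + 2 ^ w * u = 1 %[mod 2 ^ w] by rewrite addnC mulnC modnMDl.
by have := @congX _ _ _ k H; rewrite exp1n.
Qed.

Lemma period_b w u m : 2 <= w -> odd u ->
  (1 + 2 ^ w * u) ^ (2 ^ m) = 1 %[mod 2 ^ m].
Proof.
move=> w2 ou; have [u' [_ ->]] := lte _ _ w2 ou m.
rewrite addnC (_ : 2 ^ (w + m) * u' = (2 ^ w * u') * 2 ^ m); first by rewrite modnMDl.
by rewrite expnD; ring.
Qed.

Lemma surj w u : 2 <= w -> odd u -> forall m y, y = 1 %[mod 2 ^ w] ->
  exists k, (1 + 2 ^ w * u) ^ k = y %[mod 2 ^ m].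
Proof.
move=> w2 ou; elim=> [|m IH] y Hy.
  by exists 0; rewrite expn0 !modn1.
have [le|lt] := leqP m.+1 w.
  by exists 0; rewrite expn0; apply: (@cong_exp m.+1 w 1 y le); rewrite Hy.
have [k Hk] := IH y Hy.
have [t1 [t2 E]] := (cong_ex _ _ _).1 Hk.
have [u' [ou' Ec]] := lte _ _ w2 ou (m - w).
have ex : odd ((1 + 2 ^ w * u) ^ k).
  by apply: odd_pow; rewrite oddD oddM oddX /=; have -> : (w == 0) = false by lia.
have Em : w + (m - w) = m by lia.
rewrite Em in Ec.
set x := (1 + 2 ^ w * u) ^ k in E ex.
have [D eD] : {D | 2 ^ m = D} by exists (2 ^ m).
rewrite eD in E Ec.
have E2 : x + D * (t1 + t2) = y + 2 * D * t2.
  by rewrite mulnDr addnA E; ring.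
case: (boolP (odd (t1 + t2))) => Ht.
  have [s Hs] := odd_ex _ Ht.
  have oxu : odd (x * u') by rewrite oddM ex ou'.
  have [r Hr] := odd_ex _ oxu.
  exists (k + 2 ^ (m - w)); apply/cong_ex; exists s, (t2 + r).
  rewrite expnD Ec -/x expnS eD.
  have -> : x * (1 + D * u') + 2 * D * s = x + D * (2 * s + 1) + 2 * D * r.
    by rewrite mulnDr muln1 mulnCA Hr; ring.
  by rewrite -Hs E2; ring.
have [s Hs] := even_ex _ Ht.
exists k; apply/cong_ex; exists s, t2; rewrite -/x expnS eD.
rewrite Hs in E2; rewrite -E2; ring.
Qed.

Lemma closure_pow a y : 1 < a ->
  (forall m, exists2 p, 0 < p & a ^ p = 1 %[mod 2 ^ m]) ->
  (closure2 (pow_set a) y <-> odd y /\ forall m, exists k, a ^ k = y %[mod 2 ^ m]).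
Proof.
move=> a1 per; split.
  case=> oy H; split => // m.
  case: m => [|m]; first by exists 0; rewrite !modn1.
  have y0 : 0 < y by case: (posnP y) oy => // ->.
  have [|s [[k [_ ->]] [_ [_ [t Et]]]]] := H y m.+1 y0 (ltn0Sn _).
    by split => //; exists 0; rewrite muln0 addn0.
  by exists k; rewrite Et addnC mulnC modnMDl.
case=> oy H; split => // x m x0 m0 [_ [t0 Ey]].
have [k Hk] := H m; have [p p0 Hp] := per m.
set K := k + p * y.+1.
have HK : a ^ K = y %[mod 2 ^ m].
  rewrite /K expnD expnM -Hk.
  have E1 : (a ^ p) ^ y.+1 = 1 %[mod 2 ^ m].
    by have := @congX _ _ _ y.+1 Hp; rewrite exp1n.
  by have := @congM _ _ _ _ _ (erefl (a ^ k %% 2 ^ m)) E1; rewrite muln1.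
have Kge : y < a ^ K.
  apply: leq_ltn_trans (ltn_expl K a1); rewrite /K.
  by apply: leq_trans (leq_addl _ _); apply: leq_trans (leq_pmull _ p0).
exists (a ^ K); split; first by exists K; split => //; rewrite /K; lia.
have os : odd (a ^ K) by rewrite (cong_odd _ _ _ m0 HK).
split => //; split => //.
have Hx : a ^ K = x %[mod 2 ^ m] by rewrite HK Ey addnC mulnC modnMDl.
have xle : x <= a ^ K by rewrite Ey in Kge; lia.
move/eqP: Hx; rewrite eqn_mod_dvd // => /dvdnP [q Eq].
by exists q; rewrite mulnC -Eq subnKC.
Qed.

Lemma not_three (X : nat -> Prop) m M r1 r2 : m <= M ->
  (forall x, X x -> x %% 2 ^ M = r1 \/ x %% 2 ^ M = r2) -> ~ three_residues X m.
Proof.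
move=> le HX [x1 [x2 [x3 [[H1 H2 H3] [n12 n13 n23]]]]].
have C := fun x y (E : x %% 2 ^ M = y %% 2 ^ M) => @cong_exp m M x y le E.
case: (HX _ H1) => e1; case: (HX _ H2) => e2; case: (HX _ H3) => e3;
 first [ by move/eqP: n12; apply; apply: C; rewrite e1 e2
       | by move/eqP: n13; apply; apply: C; rewrite e1 e3
       | by move/eqP: n23; apply; apply: C; rewrite e2 e3 ].
Qed.

Lemma sat_mod (X : nat -> Prop) n x : saturated X n -> (forall x, X x -> odd x) ->
  0 < n -> X x -> X (x %% 2 ^ n).
Proof.
move=> sat Xodd n0 Xx; apply: sat.
  have : odd (x %% 2 ^ n).
    rewrite odd_mod; first exact: Xodd.
    by rewrite oddX; case: n n0.
  by case: (x %% 2 ^ n).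
by exists x; split => //; rewrite modn_mod.
Qed.

Lemma vZ n x : 1 < 2 ^ n -> val ((x%:R : 'Z_(2 ^ n))%R) = x %% 2 ^ n.
Proof. move=> p1; exact: (@val_Zp_nat (2 ^ n) p1 x). Qed.

Lemma vZ1 n : 1 < 2 ^ n -> val (1%R : 'Z_(2 ^ n)) = 1.
Proof. by move=> p1; have := @vZ n 1 p1; rewrite modn_small. Qed.

Lemma index4 (X : nat -> Prop) n (c : nat -> nat) :
  2 < n -> (forall x, X x -> odd x) -> saturated X n ->
  X 1 -> (forall x y, X x -> X y -> X (x * y)) ->
  (forall i, i < 4 -> X (c i) /\ c i < 2 ^ n) ->
  (forall i j, i < 4 -> j < 4 -> c i = c j -> i = j) ->
  (forall r, r < 2 ^ n -> X r -> exists2 i, i < 4 & r = c i) ->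
  index_X X n = 2 ^ (n - 3).
Proof.
move=> n2 Xodd sat X1 XM Hc Hinj Hcov.
have n0 : 0 < n by lia.
have p1 : 1 < 2 ^ n by rewrite -{1}(expn0 2) ltn_exp2l.
have memP : forall u : {unit 'Z_(2 ^ n)},
    (u \in piX_units X n) <-> X (val (val u) : nat).
  move=> u; rewrite inE; split.
    move/asboolP => [x [Xx Ex]].
    have -> : (val (val u) : nat) = x %% 2 ^ n.
      by rewrite -Ex vZ.
    exact: sat_mod.
  by move=> Xu; apply/asboolP; exists (val (val u)); split => //; exact: natr_Zp.
have gH : group_set (piX_units X n).
  apply/group_setP; split.
    by apply/memP.
  move=> u v /memP Xu /memP Xv; apply/memP.
  rewrite FinRing.val_unitM.
  have -> : (val u * val v : 'Z_(2 ^ n))%R = ((val (val u) * val (val v))%:R)%R.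
    by rewrite GRing.natrM !natr_Zp.
  rewrite vZ //; apply: sat_mod => //; exact: XM.
have cH : #|piX_units X n| = 4.
  rewrite -(card_imset _ val_inj).
  have -> : val @: piX_units X n = [set ((c i)%:R : 'Z_(2 ^ n))%R | i : 'I_4].
    apply/setP => r; apply/imsetP/imsetP.
      case=> u /memP Xu ->.
      have lt : (val (val u) : nat) < 2 ^ n.
        exact: (leq_trans (ltn_ord (val u)) (eq_leq (Zp_cast p1))).
      have [i i4 Ei] := Hcov _ lt Xu.
      exists (Ordinal i4) => //=.
      by rewrite -Ei natr_Zp.
    case=> i _ ->.
    have [Xci ci] := Hc i (ltn_ord i).
    have un : ((c i)%:R : 'Z_(2 ^ n))%R \is a GRing.unit.
      by rewrite unitZpE // coprime_pexpl // coprime2n; exact: Xodd.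
    exists (Sub ((c i)%:R)%R un : {unit 'Z_(2 ^ n)}); last by rewrite SubK.
    by apply/memP; rewrite SubK vZ // modn_small.
  rewrite card_imset ?card_ord //.
  move=> i j /(congr1 val); rewrite !vZ //.
  have [_ ci] := Hc i (ltn_ord i); have [_ cj] := Hc j (ltn_ord j).
  rewrite !modn_small // => E; apply: val_inj; exact: (Hinj _ _ (ltn_ord i) (ltn_ord j) E).
rewrite /index_X -(divgS (G := [set: {unit 'Z_(2 ^ n)}]%G) (H := Group gH)) ?subsetT //.
rewrite /= cH.
have := card_units_Zp (p := 2 ^ n) (ltnW p1); rewrite /units_Zp => ->.
rewrite totient_pfactor //.
have -> : 2 ^ n.-1 = 2 ^ (n - 3) * 4.
  by rewrite (_ : 4 = 2 ^ 2) // -expnD; congr (2 ^ _); lia.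
by rewrite mul1n mulnK.
Qed.

Lemma res2 V x : 0 < V -> x = 1 %[mod 2 ^ V] ->
  x %% 2 ^ V.+1 = 1 \/ x %% 2 ^ V.+1 = 1 + 2 ^ V.
Proof.
move=> V0 Hx.
have P1 : 1 < 2 ^ V by rewrite -{1}(expn0 2) ltn_exp2l.
have [k ->] := (cong_small _ _ _ P1).1 Hx.
have E : 1 + 2 ^ V * k = k./2 * 2 ^ V.+1 + (1 + 2 ^ V * odd k).
  rewrite -{1}(odd_double_half k) expnS -!muln2; ring.
rewrite E modnMDl modn_small; last first.
  by rewrite expnS; case: (odd k); lia.
by case: (odd k); [right; rewrite muln1 | left; rewrite muln0 addn0].
Qed.

Lemma case1 V u : 2 <= V -> odd u ->
    exists n, is_nX (closure2 (pow_set (1 + 2 ^ V * u))) n /\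
      (forall y, closure2 (pow_set (1 + 2 ^ V * u)) y <-> exists k, y = 1 + 2 ^ (n - 2) * k) /\
      index_X (closure2 (pow_set (1 + 2 ^ V * u))) n = 2 ^ (n - 3).
Proof.
move=> V2 ou.
set a := 1 + 2 ^ V * u.
set X := closure2 (pow_set a).
have V0 : 0 < V by lia.
have P4 : 4 <= 2 ^ V by rewrite (_ : 4 = 2 ^ 2) // leq_exp2l.
have u0 : 0 < u by case: (posnP u) ou => // ->.
have a1 : 1 < a by rewrite /a; have := leq_mul P4 u0; lia.
have charX : forall y, X y <-> y = 1 %[mod 2 ^ V].
  move=> y; rewrite /X closure_pow //; last first.
    by move=> m; exists (2 ^ m); [rewrite expn_gt0 | exact: period_b].
  split.
    by case=> _ /(_ V) [k Hk]; rewrite -Hk image_b.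
  move=> Hy; split; first by rewrite (cong_odd _ _ _ V0 Hy).
  by move=> m; exact: surj.
have Xodd : forall y, X y -> odd y.
  by move=> y /charX Hy; rewrite (cong_odd _ _ _ V0 Hy).
have sat : saturated X V.+2.
  move=> y _ [x [/charX Hx Exy]]; apply/charX.
  rewrite -Hx; apply: (@cong_exp V V.+2); first lia.
  by [] || exact/esym.
have X1t : forall t, X (1 + 2 ^ V * t).
  by move=> t; apply/charX; rewrite addnC mulnC modnMDl.
have E4 : 2 ^ V.+2 = 4 * 2 ^ V by rewrite !expnS; ring.
exists V.+2; split; [split => //; split|].
- split => //.
  exists 1, (1 + 2 ^ V * 1), (1 + 2 ^ V * 2); split.
    by split; [apply/charX | exact: X1t | exact: X1t].
  rewrite E4 !modn_small; try lia.
  by split; apply/eqP; lia.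
- move=> m m0 lt [_ H3]; apply: (@not_three X m V.+1 1 (1 + 2 ^ V) _ _ H3).
    by [].
  by move=> x /charX; exact: res2.
split.
  move=> y; rewrite charX (_ : V.+2 - 2 = V); last by lia.
  by apply: cong_small; lia.
apply: (@index4 X V.+2 (fun i => 1 + 2 ^ V * i)) => //.
- by apply/charX.
- move=> x y /charX Hx /charX Hy; apply/charX.
  by rewrite -(muln1 1); apply: congM.
- move=> i i4; split; first exact: X1t.
  by rewrite E4; nia.
- by move=> i j _ _ /eqP; rewrite eqn_add2l eqn_pmul2l ?expn_gt0 // => /eqP.
- move=> r lt /charX Hr.
  have P1 : 1 < 2 ^ V by lia.
  have [k Ek] := (cong_small _ _ _ P1).1 Hr.
  exists k => //; rewrite Ek E4 in lt.
  by rewrite -(ltn_pmul2l (expn_gt0 2 V)); lia.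
Qed.

Lemma case2 v u k : 2 <= v -> odd u -> 4 * (k + 1) = 2 ^ v * u ->
    exists n, is_nX (closure2 (pow_set (3 + 4 * k))) n /\
      (forall y, closure2 (pow_set (3 + 4 * k)) y <->
         (exists k, y = 1 + 2 ^ (n - 1) * k) \/
         (exists k, y = (2 ^ (n - 2) - 1) + 2 ^ (n - 1) * k)) /\
      index_X (closure2 (pow_set (3 + 4 * k))) n = 2 ^ (n - 3).
Proof.
move=> v2 ou Hu.
set a := 3 + 4 * k.
set X := closure2 (pow_set a).
set W := v.+1.
set P := 2 ^ v.
have [Q EQ] : exists Q, P = 2 * Q + 2.
  exists (2 * 2 ^ (v - 2) - 1).
  have E : 2 ^ v = 4 * 2 ^ (v - 2) by rewrite (_ : 4 = 2 ^ 2) // -expnD subnKC.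
  have : 0 < 2 ^ (v - 2) by rewrite expn_gt0.
  rewrite /P E; lia.
set c := 2 * Q + 1.
have cP : c = P - 1 by rewrite EQ /c; lia.
have DW : 2 ^ W = 2 * P by rewrite /W expnS.
have W0 : 0 < W by [].
set u2 := (1 + 2 * k) * u.
have ou2 : odd u2 by rewrite /u2 oddM oddD oddM ou.
have Eb : a ^ 2 = 1 + 2 ^ W * u2.
  rewrite /u2 DW /a (_ : (3 + 4 * k) ^ 2 = 1 + 2 * (1 + 2 * k) * (4 * (k + 1))); last by ring.
  by rewrite Hu -/P; ring.
have W2 : 2 <= W by rewrite /W; lia.
have [r Er] := odd_ex _ ou.
have Ea : a = c + 2 ^ W * r.
  rewrite DW; move: Hu; rewrite -/P Er /a /c EQ; nia.
have ac : a = c %[mod 2 ^ W] by rewrite Ea addnC mulnC modnMDl.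
have cc : c * c = 1 %[mod 2 ^ W].
  rewrite DW (_ : c * c = Q * (2 * P) + 1); first by rewrite modnMDl.
  by rewrite EQ /c; ring.
have c1 : c < 2 ^ W by rewrite DW; lia.
have oc : odd c by rewrite /c oddD oddM.
have a1 : 1 < a by rewrite /a; lia.
have Xb : forall i, (a ^ 2) ^ i = 1 %[mod 2 ^ W] by move=> i; rewrite Eb image_b.
have charX : forall y, X y <-> y = 1 %[mod 2 ^ W] \/ y = c %[mod 2 ^ W].
  move=> y; rewrite /X closure_pow //; last first.
    move=> m; exists (2 * 2 ^ m); first by rewrite muln_gt0 expn_gt0.
    by rewrite expnM Eb; exact: period_b.
  split.
    case=> _ /(_ W) [j Hj].
    have Ej : a ^ j = a ^ (odd j) * (a ^ 2) ^ j./2.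
      by rewrite -expnM -expnD -{1}(odd_double_half j) -muln2 mulnC.
    have := @congM _ _ _ _ _ (erefl (a ^ odd j %% 2 ^ W)) (Xb j./2).
    rewrite -Ej Hj muln1; case: (odd j) => /= ->.
      by right; rewrite expn1.
    by left.
  case=> Hy.
    split; first by rewrite (cong_odd _ _ _ W0 Hy).
    move=> m; have [i Hi] := surj _ _ W2 ou2 m _ Hy.
    by exists (2 * i); rewrite expnM Eb.
  split; first by rewrite (cong_odd _ _ _ W0 Hy).
  move=> m.
  set z := y * a * (a ^ 2) ^ (2 ^ m).-1.
  have Hz : z = 1 %[mod 2 ^ W].
    rewrite /z -(muln1 1).
    apply: congM; last exact: Xb.
    by rewrite -cc; apply: congM.
  have [i Hi] := surj _ _ W2 ou2 m _ Hz.
  exists (2 * i).+1; rewrite expnS expnM Eb.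
  have := @congM _ _ _ _ _ (erefl (a %% 2 ^ m)) Hi => ->.
  have -> : a * z = y * (a ^ 2) ^ (2 ^ m).
    have rid : forall (a0 y0 N : nat), a0 * (y0 * a0 * (a0 ^ 2) ^ N) = y0 * (a0 ^ 2) ^ N.+1.
      by move=> a0 y0 N; rewrite [_ ^ N.+1]expnS; ring.
    by rewrite /z; case: (2 ^ m) (expn_gt0 2 m) => // N _ /=; rewrite rid.
  rewrite -{2}(muln1 y); apply: congM => //; rewrite Eb; exact: period_b.
have Xodd : forall y, X y -> odd y.
  by move=> y /charX [] Hy; rewrite (cong_odd _ _ _ W0 Hy).
have sat : saturated X W.+1.
  move=> y _ [x [/charX Hx Exy]]; apply/charX.
  have Exy' : y = x %[mod 2 ^ W].
    by apply: (@cong_exp W W.+1); [lia | exact/esym].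
  by rewrite Exy'.
have X1 : X 1 by apply/charX; left.
have Xc : X c by apply/charX; right.
have X1t : forall t, X (1 + 2 ^ W * t).
  by move=> t; apply/charX; left; rewrite addnC mulnC modnMDl.
have Xct : forall t, X (c + 2 ^ W * t).
  by move=> t; apply/charX; right; rewrite addnC mulnC modnMDl.
have E4 : 2 ^ W.+1 = 4 * P by rewrite expnS DW; ring.
have P4 : 4 <= P by rewrite EQ; lia.
exists W.+1; split; [split => //; split|].
- split => //.
  exists 1, (1 + 2 ^ W * 1), c; split => //.
  rewrite E4 DW !modn_small; try lia.
  by split; apply/eqP; lia.
- move=> m m0 lt [_ H3]; apply: (@not_three X m W 1 c _ _ H3).
    by rewrite /W; lia.
  by move=> x /charX [] ->; rewrite modn_small //; (by left) || (by right) || (by rewrite DW; lia).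
split.
  move=> y; rewrite charX (_ : W.+1 - 1 = W); last by lia.
  rewrite (_ : W.+1 - 2 = v); last by rewrite /W; lia.
  rewrite -/P -cP; split; case=> H.
  - by left; apply/cong_small => //; rewrite DW; lia.
  - by right; apply/cong_small.
  - by left; apply/(cong_small 1 (2 ^ W) y) => //; rewrite DW; lia.
  - by right; apply/(cong_small c (2 ^ W) y).
apply: (@index4 X W.+1 (fun i => nth 0 [:: 1; 1 + 2 ^ W * 1; c; c + 2 ^ W * 1] i)) => //.
- move=> x y /charX Hx /charX Hy; apply/charX.
  case: Hx => Hx; case: Hy => Hy.
  + by left; rewrite -(muln1 1); apply: congM.
  + by right; rewrite -(mul1n c); apply: congM.
  + by right; rewrite -(muln1 c); apply: congM.
  + by left; rewrite -cc; apply: congM.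
- move=> i; rewrite E4.
  by case: i => [|[|[|[|i]]]] //= _; (split; [try apply: X1t; try apply: Xct | rewrite ?DW; lia]).
- rewrite DW => i j.
  by case: i => [|[|[|[|i]]]]; case: j => [|[|[|[|j]]]] //= _ _; lia.
- move=> y lt /charX [] Hy.
  + have P1' : 1 < 2 ^ W by rewrite DW; lia.
    have [t Et] := (cong_small 1 (2 ^ W) y P1').1 Hy.
    rewrite Et E4 DW in lt; rewrite Et.
    have : t < 2 by rewrite -(ltn_pmul2l (_ : 0 < 2 * P)); lia.
    by case: t {Et lt} => [|[|t]] // _; [exists 0; rewrite // muln0 addn0 | exists 1].
  + have [t Et] := (cong_small c (2 ^ W) y c1).1 Hy.
    rewrite Et E4 DW in lt; rewrite Et.
    have : t < 2 by rewrite -(ltn_pmul2l (_ : 0 < 2 * P)); lia.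
    by case: t {Et lt} => [|[|t]] // _; [exists 2; rewrite // muln0 addn0 | exists 3].
Qed.

Theorem lemma4p6 (a : nat) :
  ((exists k, 0 < k /\ a = 1 + 4 * k) ->
    exists n, is_nX (closure2 (pow_set a)) n /\
      (forall y, closure2 (pow_set a) y <-> exists k, y = 1 + 2 ^ (n - 2) * k) /\
      index_X (closure2 (pow_set a)) n = 2 ^ (n - 3)) /\
  ((exists k, 0 < k /\ a = 3 + 4 * k) ->
    exists n, is_nX (closure2 (pow_set a)) n /\
      (forall y, closure2 (pow_set a) y <->
         (exists k, y = 1 + 2 ^ (n - 1) * k) \/
         (exists k, y = (2 ^ (n - 2) - 1) + 2 ^ (n - 1) * k)) /\
      index_X (closure2 (pow_set a)) n = 2 ^ (n - 3)).
Proof.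
split.
  case=> k [k0 ->].
  have [u cu Ek] := pfactor_coprime (isT : prime 2) k0.
  have -> : 1 + 4 * k = 1 + 2 ^ (logn 2 k + 2) * u.
    by rewrite {1}Ek expnD; ring.
  by apply: case1; [lia | rewrite -coprime2n].
case=> k [k0 ->].
have k1 : 0 < k + 1 by lia.
have [u cu Ek] := pfactor_coprime (isT : prime 2) k1.
apply: (@case2 (logn 2 (k + 1) + 2) u); [lia | by rewrite -coprime2n |].
by rewrite {1}Ek expnD; ring.
Qed.
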